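(* Let $b$ be a positive real number, let $T=(V,E)$ be a tree with $|V|\ge3$, and let $\ell:V\to[0,1]$ satisfy $\sum_{v\in V}\ell(v)\le1$. For $v\in V$ let $L(v)$ be the set of leaves of $T$ adjacent to $v$, and suppose that $\ell(v)+\sum_{u\in L(v)}\ell(u)\ge |L(v)|/b$ for all $v\in V$. Then $T$ has at most $b$ leaves. *)

(* Defs.v *)
From HB Require Import structures.
From mathcomp Require Import all_boot all_order all_algebra.
From mathcomp Require Import reals.
Set Implicit Arguments. Unset Strict Implicit. Unset Printing Implicit Defensive.

Definition simple_graph (V : finType) (e : rel V) : Prop :=
  symmetric e /\ irreflexive e.

Definition connected_graph (V : finType) (e : rel V) : Prop :=
  forall x y : V, connect e x y.

Definition acyclic_graph (V : finType) (e : rel V) : Prop :=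
  forall c : seq V, uniq c -> cycle e c -> size c < 3.

Definition is_tree (V : finType) (e : rel V) : Prop :=
  [/\ simple_graph e, connected_graph e & acyclic_graph e].

Definition nbhd (V : finType) (e : rel V) (v : V) : {set V} := [set u | e v u].
Definition deg (V : finType) (e : rel V) (v : V) : nat := #|nbhd e v|.

Definition leaves (V : finType) (e : rel V) : {set V} := [set v | deg e v == 1%N].

Definition adj_leaves (V : finType) (e : rel V) (v : V) : {set V} :=
  nbhd e v :&: leaves e.

(* Main.v *)
Require Import Defs.
From HB Require Import structures.
From mathcomp Require Import all_boot all_order all_algebra.
From mathcomp Require Import reals.
Import Order.TTheory GRing.Theory Num.Theory.
Set Implicit Arguments. Unset Strict Implicit.
Local Open Scope ring_scope.

Lemma leaf_nbhd (V : finType) (e : rel V) u w :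
  u \in leaves e -> e u w -> nbhd e u = [set w].
Proof.
rewrite inE /deg => /cards1P [x hx] euw.
have : w \in nbhd e u by rewrite inE.
by rewrite hx inE => /eqP ->.
Qed.

Lemma leaf_nbr_nonleaf (V : finType) (e : rel V) u w :
  is_tree e -> (3 <= #|V|)%N -> u \in leaves e -> e u w -> w \notin leaves e.
Proof.
move=> [[sym irr] conn _] h3 lu euw; apply/negP => lw.
have nu := leaf_nbhd lu euw.
have ewu : e w u by rewrite sym.
have nw := leaf_nbhd lw ewu.
have : ~~ ([set: V] \subset [set u; w]).
  apply/negP => /subset_leq_card; rewrite cardsT cards2.
  by case: (u != w) h3 => //= h; move=> /(leq_trans h).
case/subsetPn => z _ zn.
have cl : forall x y, x \in [set u; w] -> e x y -> y \in [set u; w].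
  move=> x y; rewrite !inE => /orP [] /eqP -> exy.
  - have : y \in nbhd e u by rewrite inE.
    by rewrite nu inE => ->; rewrite orbT.
  - have : y \in nbhd e w by rewrite inE.
    by rewrite nw inE => ->.
have pl : forall p x, x \in [set u; w] -> path e x p -> last x p \in [set u; w].
  elim=> [|y p IH] x hx //=.
  by case/andP => exy hp; apply: IH => //; apply: cl exy.
move: (conn u z) => /connectP [p hp lz].
move: zn; rewrite lz; apply/negP/negPn; apply: pl hp.
by rewrite !inE eqxx.
Qed.

Lemma swap_sum (R : realType) (V : finType) (e : rel V) (f : V -> R) :
  is_tree e -> (3 <= #|V|)%N ->
  \sum_(v in ~: leaves e) \sum_(u in adj_leaves e v) f u = \sum_(u in leaves e) f u.
Proof.
move=> tr h3.
rewrite (exchange_big_dep (fun u => u \in leaves e)) /=; last first.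
  by move=> v u _; rewrite inE => /andP [].
apply: eq_bigr => u lu.
have sym : symmetric e by case: tr => [[]].
have : #|nbhd e u| == 1%N by move: lu; rewrite inE.
case/cards1P => w hw.
have euw : e u w.
  have : w \in nbhd e u by rewrite hw inE.
  by rewrite inE.
rewrite (big_pred1 w) // => v /=.
rewrite /adj_leaves in_setI lu andbT [u \in nbhd e v]inE sym.
have -> : e u v = (v == w) by move: (hw) => /setP /(_ v); rewrite !inE.
case: (eqVneq v w) => [->|]; rewrite ?andbT ?andbF //.
by rewrite inE; exact: leaf_nbr_nonleaf tr h3 lu euw.
Qed.

Theorem proposition10 (R : realType) (b : R) (V : finType) (e : rel V)
    (ell : V -> R) :
  0 < b ->
  is_tree e ->
  (3 <= #|V|)%N ->
  (forall v, 0 <= ell v <= 1) ->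
  \sum_(v : V) ell v <= 1 ->
  (forall v, ell v + \sum_(u in adj_leaves e v) ell u >= (#|adj_leaves e v|)%:R / b) ->
  (#|leaves e|)%:R <= b.
Proof.
move=> b0 tr h3 _ hs hv.
have c1 : (#|leaves e|)%:R = \sum_(v in ~: leaves e) (#|adj_leaves e v|)%:R :> R.
  have := swap_sum (fun _ => 1 : R) tr h3; rewrite /= sumr_const => <-.
  by apply: eq_bigr => v _; rewrite sumr_const.
have s1 : \sum_(v in ~: leaves e) (ell v + \sum_(u in adj_leaves e v) ell u) <= 1.
  rewrite big_split /= swap_sum //.
  have E : \sum_v ell v = \sum_(v in leaves e) ell v + \sum_(v in ~: leaves e) ell v.
    by rewrite (bigID (fun v => v \in leaves e)) /=; congr (_ + _); apply: eq_bigl => v; rewrite ?inE.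
  by rewrite addrC -E.
have : (#|leaves e|)%:R / b <= 1.
  apply: le_trans s1; rewrite c1 mulr_suml; apply: ler_sum => v _; exact: hv.
by rewrite ler_pdivrMr // mul1r.
Qed.
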